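(* Let $0<p<1$ and let $r$ be a positive integer. A bounded row vector $\vec x=(\dots,x_{-2},x_{-1},x_0,x_1,x_2,\dots)$ (indexed by the integers) belongs to $\mathrm{rowcone}(\{\mathcal{M}_{DNB(p,r)}\})$ if for all integers $k$, $$\sum_{j=-r}^{r}(-1)^j f_B\!\left(j;\tfrac{p}{1+p},r\right)x_{k+j}\ \ge\ 0,$$ where $f_B(\cdot;\frac{p}{1+p},r)$ is the probability mass function of $X-Y$ for independent $X,Y$ having the Binomial distribution with success probability $\frac{p}{1+p}$ and $r$ trials.
   Context: The negative binomial NB$(p,r)$ distribution has mass $\binom{k+r-1}{k}p^k(1-p)^r$ on nonnegative integers $k$. $\mathcal{M}_{DNB(p,r)}$ (differenced negative binomial mechanism) is the algorithm with input domain and range the integers $\mathbb{Z}$ that adds $X-Y$ to its input, where $X,Y$ are independent NB$(p,r)$ random variables. An algorithm is identified with its output probabilities. For algorithms $\mathcal{M}$, $\mathcal{A}$ with $\mathrm{range}(\mathcal{M})\subseteq\mathrm{domain}(\mathcal{A})$ and independent randomness, $\mathcal{A}\circ\mathcal{M}$ runs $\mathcal{M}$ then $\mathcal{A}$ on its output. $\mathrm{CNF}(\mathrm{Priv})$ of a set of algorithms with domain $\mathbb{Z}$ is the smallest set $S$ containing $\mathrm{Priv}$ such that $\mathcal{M}\in S$ implies $\mathcal{A}\circ\mathcal{M}\in S$ for every such $\mathcal{A}$, and $\mathcal{M}_1,\mathcal{M}_2\in S$, $t\in[0,1]$ implies that the algorithm running $\mathcal{M}_1$ with probability $t$ and $\mathcal{M}_2$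 with probability $1-t$ is in $S$. $\mathrm{rowcone}(\mathrm{Priv})=\{(c\,P[\mathcal{M}(n)=\omega])_{n\in\mathbb{Z}} : c\ge0,\ \mathcal{M}\in\mathrm{CNF}(\mathrm{Priv}),\ \omega\in\mathrm{range}(\mathcal{M})\}$. *)

(* Defs.v *)
From HB Require Import structures.
From mathcomp Require Import all_boot all_order all_algebra.
From mathcomp Require Import all_classical all_reals.
From mathcomp Require Import ereal esum.
Set Implicit Arguments. Unset Strict Implicit. Unset Printing Implicit Defensive.
Import Order.TTheory GRing.Theory Num.Theory.
Local Open Scope classical_set_scope.
Local Open Scope ring_scope.

(* An algorithm with input domain Z and (discrete) range Omega is identified
   with its output probabilities: M n w = P[M(n) = w]. *)
Definition is_alg (R : realType) (Omega : choiceType) (M : int -> Omega -> R) : Prop :=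
  forall n : int, (forall w, 0 <= M n w) /\ (\esum_(w in setT) (M n w)%:E = 1%E).

Definition nb_pmf (R : realType) (p : R) (r k : nat) : R :=
  ('C(k + r - 1, k))%:R * p ^+ k * (1 - p) ^+ r.

Definition dnb_pmf (R : realType) (p : R) (r : nat) (d : int) : R :=
  fine (\esum_(ij in [set ij : nat * nat | (ij.1%:Z - ij.2%:Z)%R = d])
          (nb_pmf p r ij.1 * nb_pmf p r ij.2)%:E).

Definition M_DNB (R : realType) (p : R) (r : nat) : int -> int -> R :=
  fun n w => dnb_pmf p r (w - n).

Definition postproc (R : realType) (Omega Omega' : choiceType)
  (A : Omega -> Omega' -> R) (M : int -> Omega -> R) : int -> Omega' -> R :=
  fun n w' => fine (\esum_(w in setT) (M n w * A w w')%:E).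

Definition is_kernel (R : realType) (Omega Omega' : choiceType)
  (A : Omega -> Omega' -> R) : Prop :=
  forall w, (forall w', 0 <= A w w') /\ (\esum_(w' in setT) (A w w')%:E = 1%E).

Inductive CNF_DNB (R : realType) (p : R) (r : nat) :
    forall (Omega : choiceType), (int -> Omega -> R) -> Prop :=
  | CNF_base : @CNF_DNB R p r int (M_DNB p r)
  | CNF_post : forall (Omega Omega' : choiceType) (M : int -> Omega -> R)
      (A : Omega -> Omega' -> R),
      @CNF_DNB R p r Omega M -> is_kernel A ->
      @CNF_DNB R p r Omega' (postproc A M)
  | CNF_mix : forall (Omega : choiceType) (M1 M2 : int -> Omega -> R) (t : R),
      @CNF_DNB R p r Omega M1 -> @CNF_DNB R p r Omega M2 -> 0 <= t <= 1 ->
      @CNF_DNB R p r Omega (fun n w => t * M1 n w + (1 - t) * M2 n w).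

Definition rowcone_DNB (R : realType) (p : R) (r : nat) (x : int -> R) : Prop :=
  exists (c : R) (Omega : choiceType) (M : int -> Omega -> R) (w : Omega),
    0 <= c /\ @CNF_DNB R p r Omega M /\ (forall n, x n = c * M n w).

Definition binom_pmf (R : realType) (q : R) (r k : nat) : R :=
  ('C(r, k))%:R * q ^+ k * (1 - q) ^+ (r - k).

Definition fB (R : realType) (q : R) (r : nat) (j : int) : R :=
  \sum_(i < r.+1) \sum_(l < r.+1)
     (if (i%:Z - l%:Z)%R == j then binom_pmf q r i * binom_pmf q r l else 0).

(* Main.v *)
Require Import Defs.
From HB Require Import structures.
From mathcomp Require Import all_boot all_order all_algebra.
From mathcomp Require Import all_classical all_reals.
From mathcomp Require Import ereal esum.
From mathcomp Require Import ring lra zify finmap.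
Import Order.TTheory GRing.Theory Num.Theory.
Local Open Scope ring_scope.
Local Open Scope classical_set_scope.
Definition Nc (k u : nat) : nat := 'C(u + k - 1, u).

Lemma NcS k u : Nc k.+1 u.+1 = (Nc k.+1 u + Nc k u.+1)%N.
Proof.
rewrite /Nc.
have -> : (u.+1 + k.+1 - 1 = (u + k).+1)%N by rewrite addSn addnS subn1.
have -> : (u + k.+1 - 1 = u + k)%N by rewrite addnS subn1.
have -> : (u.+1 + k - 1 = u + k)%N by rewrite addSn subn1.
by rewrite binS addnC.
Qed.

Lemma Nc_0 k : Nc k 0 = 1%N.
Proof. by rewrite /Nc bin0. Qed.

Lemma Nc0S u : Nc 0 u.+1 = 0%N.
Proof. by rewrite /Nc addn0 subn1 /= bin_small. Qed.

Definition Gs (R : ringType) (m k u : nat) : R :=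
  \sum_(i < u.+1) (-1) ^+ i * ('C(m, i))%:R * (Nc k (u - i))%:R.

Lemma Gs_rec (R : ringType) m k u :
  Gs R m.+1 k u.+1 = Gs R m k u.+1 - Gs R m k u.
Proof.
rewrite /Gs big_ord_recl [in RHS]big_ord_recl /= !bin0 !expr0 !mul1r.
rewrite subn0.
under eq_bigr => i _ do rewrite /bump /= add1n subSS binS natrD exprS.
under [X in _ = _ + X - _]eq_bigr => i _ do rewrite /bump /= add1n subSS exprS.
rewrite -addrA; congr (_ + _).
rewrite -sumrB; apply: eq_bigr => i _.
rewrite !mulN1r !mulNr mulrDr mulrDl opprD addrC.
by [].
Qed.

Lemma Gs_0 (R : ringType) m k : Gs R m k 0 = 1.
Proof. by rewrite /Gs big_ord1 /= expr0 bin0 subn0 Nc_0 !mul1r. Qed.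

Lemma Gs_N (R : ringType) r : forall m u, (m <= r)%N -> Gs R m r u = (Nc (r - m) u)%:R.
Proof.
elim=> [|m IH] u hm.
  rewrite /Gs big_ord_recl /= expr0 bin0 subn0 subn0 !mul1r.
  rewrite big1 ?addr0 // => i _; by rewrite bin0n /= mulr0 mul0r.
case: u => [|u]; first by rewrite Gs_0 Nc_0.
rewrite Gs_rec !IH ?(ltnW hm) //.
have -> : (r - m = (r - m.+1).+1)%N by rewrite subnSK.
by rewrite NcS natrD addrC addKr.
Qed.

Lemma nbE (R : realType) (p : R) r k :
  nb_pmf p r k = (Nc r k)%:R * p ^+ k * (1 - p) ^+ r.
Proof. by []. Qed.

Lemma sum_widen_eq (R : ringType) r u (h : nat -> R) :
  (forall i, (r < i)%N -> h i = 0) ->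
  \sum_(i < r.+1) (if (i <= u)%N then h i else 0) = \sum_(i < u.+1) h i.
Proof.
move=> h0.
rewrite (big_ord_widen (r + u).+1 (fun i => if (i <= u)%N then h i else 0)); last by rewrite ltnS leq_addr.
rewrite [RHS](big_ord_widen (r + u).+1 h); last by rewrite ltnS leq_addl.
rewrite big_mkcond [RHS]big_mkcond /=; apply: eq_bigr => i _.
rewrite ltnS ltnS; case: (ltnP r i) => ir; case: (leqP i u) => iu //=.
by rewrite h0.
Qed.

Lemma Pid (R : realType) (p : R) r u :
  \sum_(i < r.+1) (if (i <= u)%N then ('C(r, i))%:R * (- p) ^+ i * nb_pmf p r (u - i) else 0)
  = (1 - p) ^+ r * (u == 0%N)%:R.
Proof.
have E : forall i : 'I_r.+1, (if (i <= u)%N then ('C(r, i))%:R * (- p) ^+ i * nb_pmf p r (u - i) else 0)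
   = (p ^+ u * (1 - p) ^+ r) * (if (i <= u)%N then (-1) ^+ i * ('C(r, i))%:R * (Nc r (u - i))%:R else 0).
  move=> i; case: ifP => iu; last by rewrite mulr0.
  rewrite nbE [(- p) ^+ _]exprNn.
  have -> : p ^+ u = p ^+ i * p ^+ (u - i) by rewrite -exprD subnKC.
  move: (p ^+ i) (p ^+ (u - i)) ((1 - p) ^+ r) ((-1) ^+ i : R) (('C(r, i))%:R : R) ((Nc r (u - i))%:R : R) => a b c d e f; by ring.
under eq_bigr => i _ do rewrite E.
rewrite -mulr_sumr.
rewrite (@sum_widen_eq R r u (fun i => (-1) ^+ i * ('C(r, i))%:R * (Nc r (u - i))%:R : R)); last first.
  by move=> i ri; rewrite bin_small // mulr0 mul0r.
rewrite -/(Gs R r r u) Gs_N // subnn.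
clear E; case: u => [|u]; first by rewrite Nc_0 expr0 mul1r mulr1.
by rewrite Nc0S !mulr0.
Qed.
Lemma bump0E n (i : 'I_n) : nat_of_ord (lift ord0 i) = i.+1. Proof. by []. Qed.

Definition Sk {R : ringType} (p : R) (k n : nat) : R := \sum_(u < n) (Nc k u)%:R * p ^+ u.

Lemma Sk_rec (R : comRingType) (p : R) k n :
  Sk p k.+1 n.+1 = p * Sk p k.+1 n + Sk p k n.+1.
Proof.
rewrite /Sk big_ord_recl [in X in _ = _ + X]big_ord_recl !Nc_0 expr0 mulr1.
under eq_bigr => i _ do rewrite bump0E NcS natrD mulrDl.
rewrite big_split /= mulr_sumr addrCA; congr (_ + _).
by apply: eq_bigr => i _; rewrite exprS mulrCA.
Qed.

Lemma Sk_ge0 {R : realType} (p : R) k n : 0 <= p -> 0 <= Sk p k n.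
Proof. move=> p0; apply: sumr_ge0 => i _; by rewrite mulr_ge0 // exprn_ge0. Qed.

Lemma Sk_mono {R : realType} (p : R) k n : 0 <= p -> Sk p k n <= Sk p k n.+1.
Proof.
move=> p0; rewrite /Sk big_ord_recr /= lerDl; by rewrite mulr_ge0 // exprn_ge0.
Qed.

Lemma Sk_bound {R : realType} (p : R) k n : 0 <= p < 1 -> (1 - p) ^+ k * Sk p k n <= 1.
Proof.
case/andP=> p0 p1; elim: k n => [|k IH] [|n].
- by rewrite /Sk big_ord0 mulr0.
- rewrite expr0 mul1r /Sk big_ord_recl Nc_0 expr0 mulr1 big1 ?addr0 //.
  by move=> i _; rewrite bump0E Nc0S mul0r.
- by rewrite /Sk big_ord0 mulr0.
- apply: le_trans (IH n.+1).
  rewrite exprSr -mulrA; apply: ler_wpM2l; first by rewrite exprn_ge0 // subr_ge0 ltW.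
  have := Sk_mono p k.+1 n p0; rewrite Sk_rec.
  have := Sk_ge0 p k.+1 n p0.
  have := Sk_ge0 p k n.+1 p0.
  move: (Sk p k.+1 n) (Sk p k n.+1) => a b b0 a0 h.
  have -> : (1 - p) * (p * a + b) = p * a + b - p * (p * a + b) by ring.
  have : p * (p * a + b) <= p * a + b.
    rewrite ler_piMl //; last by lra.
    by apply: addr_ge0 => //; rewrite mulr_ge0.
  have : p * a <= p * (p * a + b) by rewrite ler_wpM2l.
  lra.
Qed.

Lemma nb_ge0 (R : realType) (p : R) r k : 0 <= p < 1 -> 0 <= nb_pmf p r k.
Proof.
case/andP=> p0 p1; rewrite nbE mulr_ge0 ?exprn_ge0 ?mulr_ge0 ?exprn_ge0 //; lra.
Qed.

Lemma nb_partial (R : realType) (p : R) r n : 0 <= p < 1 ->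
  \sum_(u < n) nb_pmf p r u <= 1.
Proof.
move=> hp; apply: le_trans (Sk_bound p r n hp).
rewrite /Sk mulr_sumr; apply: ler_sum => i _; rewrite nbE; lra.
Qed.

Lemma esumZ (R : realType) (T : choiceType) (S : set T) (c : R) (h : T -> R) : 0 <= c ->
  (\esum_(t in S) (c * h t)%:E = c%:E * \esum_(t in S) (h t)%:E)%E.
Proof.
move=> c0; rewrite /esum -ereal_supZl //; last first.
  apply/set0P; exists (\sum_(x \in set0) (h x)%:E)%E; exists set0 => //; exact: fsets_set0.
congr ereal_sup; apply/seteqP; split => x /=.
- case=> A [finA AS] <-; exists (\sum_(i \in A) (h i)%:E)%E; first by exists A.
  rewrite !fsumEFin // fsbig_finite //= [in RHS]fsbig_finite //= -EFinM mulr_sumr //.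
- case=> y [A [finA AS] <-] <-; exists A => //.
  rewrite !fsumEFin // fsbig_finite //= [in RHS]fsbig_finite //= -EFinM mulr_sumr //.
Qed.

Lemma esum_delta (R : realType) (T : choiceType) (S : set T) (t0 : T) (h : T -> \bar R) :
  (forall t, t <> t0 -> h t = 0%E) -> (0 <= h t0)%E -> S t0 ->
  (\esum_(t in S) h t = h t0)%E.
Proof.
move=> h0 ht0 St0.
rewrite (esumID [set t0]); last first.
  move=> t _; have [->//|ne] := pselect (t = t0); by rewrite h0.
rewrite [X in (_ + X)%E]esum1 ?adde0; last by move=> t [_ /= ne]; rewrite h0.
have -> : S `&` [set t0] = [set t0].
  by apply/seteqP; split => t /=; [case| move=> ->].
by rewrite esum_set1.
Qed.

Lemma esum_fin (R : realType) (T : choiceType) (S : set T) (h : T -> R) :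
  (forall t, 0 <= h t) -> (\esum_(t in S) (h t)%:E < +oo)%E ->
  (fine (\esum_(t in S) (h t)%:E))%:E = (\esum_(t in S) (h t)%:E)%E.
Proof.
move=> h0 hf; rewrite fineK // ge0_fin_numE //; apply: esum_ge0 => t _; by rewrite lee_fin.
Qed.

Lemma esum_lin (R : realType) (T : choiceType) (J : finType) (S : set T) (b : J -> R)
  (f : J -> T -> R) :
  (forall j, 0 <= b j) -> (forall j t, 0 <= f j t) ->
  (forall j, \esum_(t in S) (f j t)%:E < +oo)%E ->
  (\esum_(t in S) (\sum_j b j * f j t)%:E =
   (\sum_j b j * fine (\esum_(t in S) (f j t)%:E))%:E)%E.
Proof.
move=> b0 f0 ff.
under eq_esum do rewrite -sumEFin.
rewrite esum_sum; last by move=> t j _ _; rewrite lee_fin mulr_ge0.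
rewrite -sumEFin; apply: eq_bigr => j _.
by rewrite esumZ // EFinM esum_fin.
Qed.

Lemma lincomb (R : realType) (T : choiceType) (J : finType) (S : set T) (a : J -> R)
  (f : J -> T -> R) (g : T -> R) :
  (forall j t, 0 <= f j t) -> (forall j, \esum_(t in S) (f j t)%:E < +oo)%E ->
  (forall t, 0 <= g t) ->
  (forall t, S t -> \sum_j a j * f j t = g t) ->
  (\esum_(t in S) (g t)%:E = (\sum_j a j * fine (\esum_(t in S) (f j t)%:E))%:E)%E.
Proof.
move=> f0 ff g0 fg.
pose ap j := if 0 <= a j then a j else 0.
pose an j := if 0 <= a j then 0 else - a j.
have ap0 j : 0 <= ap j by rewrite /ap; case: ifP.
have an0 j : 0 <= an j by rewrite /an; case: ifP => // /negbT; rewrite -ltNge oppr_ge0 => /ltW.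
have aE j : a j = ap j - an j by rewrite /ap /an; case: ifP => _; rewrite ?subr0 ?sub0r ?opprK.
have EP := @esum_lin R T J S ap f ap0 f0 ff.
have EN := @esum_lin R T J S an f an0 f0 ff.
have PE : forall t, S t -> \sum_j ap j * f j t = g t + \sum_j an j * f j t.
  move=> t St; rewrite -fg // -big_split /=; apply: eq_bigr => j _.
  by rewrite aE mulrBl subrK.
have : (\esum_(t in S) (g t)%:E + (\sum_j an j * fine (\esum_(t in S) (f j t)%:E))%:E =
        (\sum_j ap j * fine (\esum_(t in S) (f j t)%:E))%:E)%E.
  rewrite -EN -EP -esumD; last first.
  - by move=> t _; rewrite lee_fin sumr_ge0 // => j _; rewrite mulr_ge0.
  - by move=> t _; rewrite lee_fin.
  by apply: eq_esum => t St; rewrite PE // EFinD.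
move=> H.
rewrite -[LHS](@addeK _ (\sum_j an j * fine (\esum_(t in S) (f j t)%:E))%:E) // H -EFinB.
congr EFin; rewrite -sumrB; apply: eq_bigr => j _; by rewrite -mulrBl -aE.
Qed.

Lemma esum_nb_le1 {R : realType} (p : R) r : 0 <= p < 1 ->
  (\esum_(k in [set: nat]) (nb_pmf p r k)%:E <= 1)%E.
Proof.
move=> hp; apply: ge_ereal_sup => _ [A [finA _] <-].
rewrite fsbig_finite //=.
set F := fset_set A.
pose n := ((\max_(k <- F) k).+1)%N.
apply: le_trans (lee_sum_fset_nat F n xpredT _ _) _.
- by move=> i _; rewrite lee_fin nb_ge0.
- move=> k /= kF; rewrite /n big_seq_fsetE/=.
  by rewrite -[k]/(val [`kF]%fset) ltnS leq_bigmax.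
rewrite sumEFin lee_fin big_mkord; exact: nb_partial.
Qed.

Definition Pairs (d : int) : set (nat * nat) := [set ij : nat * nat | (ij.1%:Z - ij.2%:Z)%R = d].

Lemma esum_pairs_le1 {R : realType} (p : R) r : 0 <= p < 1 ->
  (\esum_(st in [set: nat * nat]) (nb_pmf p r st.1 * nb_pmf p r st.2)%:E <= 1)%E.
Proof.
move=> hp.
rewrite (_ : [set: nat * nat] = [set: nat] `*`` (fun _ => [set: nat])); last first.
  by apply/seteqP; split => x.
rewrite -(@esum_esum R _ _ [set: nat] (fun _ => [set: nat])
   (fun i j => (nb_pmf p r i * nb_pmf p r j)%:E)); last first.
  by move=> i j _ _; rewrite lee_fin mulr_ge0 // nb_ge0.
apply: le_trans (esum_nb_le1 p r hp).
apply: le_esum => i _.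
rewrite esumZ; last exact: nb_ge0.
rewrite -[X in (_ <= X)%E]mule1.
apply: lee_wpmul2l; first by rewrite lee_fin nb_ge0.
exact: esum_nb_le1.
Qed.

Lemma esum_Pairs_fin {R : realType} (p : R) r d : 0 <= p < 1 ->
  (\esum_(st in Pairs d) (nb_pmf p r st.1 * nb_pmf p r st.2)%:E < +oo)%E.
Proof.
move=> hp; apply: (le_lt_trans _ (ltry 1)).
apply: le_trans (esum_pairs_le1 p r hp).
rewrite esum_mkcond; apply: le_esum => st _.
case: ifP => _ //; by rewrite lee_fin mulr_ge0 // nb_ge0.
Qed.

Lemma dnbE {R : realType} (p : R) r d : 0 <= p < 1 ->
  (dnb_pmf p r d)%:E = (\esum_(st in Pairs d) (nb_pmf p r st.1 * nb_pmf p r st.2)%:E)%E.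
Proof.
move=> hp; rewrite /dnb_pmf -/(Pairs d) esum_fin //.
- by move=> t; rewrite mulr_ge0 // nb_ge0.
- exact: esum_Pairs_fin.
Qed.

Lemma dnb_ge0 {R : realType} (p : R) r d : 0 <= p < 1 -> 0 <= dnb_pmf p r d.
Proof.
move=> hp; rewrite /dnb_pmf; apply: fine_ge0; apply: esum_ge0 => t _.
by rewrite lee_fin mulr_ge0 // nb_ge0.
Qed.

Lemma esum_dnb_le1 {R : realType} (p : R) r (c : int) : 0 <= p < 1 ->
  (\esum_(m in [set: int]) (dnb_pmf p r (m - c))%:E <= 1)%E.
Proof.
move=> hp.
under eq_esum do rewrite dnbE //.
rewrite (@esum_esum R _ _ [set: int] (fun m => Pairs (m - c))
   (fun m st => (nb_pmf p r st.1 * nb_pmf p r st.2)%:E)); last first.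
  by move=> i j _ _; rewrite lee_fin mulr_ge0 // nb_ge0.
apply: le_trans (esum_pairs_le1 p r hp).
rewrite (reindex_esum ([set: int] `*`` (fun m => Pairs (m - c))) [set: nat * nat] snd); first by [].
split.
- by move=> k.
- move=> [m st] [m' st'] /= /set_mem [_ h] /set_mem [_ h'] /= e; subst st'.
  congr pair; move: h h'; rewrite /Pairs /= => h h'.
  lia.
- move=> st _; exists ((st.1%:Z - st.2%:Z) + c, st) => //=.
  by split => //; rewrite /Pairs /= addrK.
Qed.

Definition cc {R : realType} (p : R) r (i : nat) : R := ('C(r, i))%:R * (- p) ^+ i.

Definition fil {R : realType} (p : R) r (il : 'I_r.+1 * 'I_r.+1) (uv : nat * nat) : R :=
  if ((il.1 <= uv.1)%N && (il.2 <= uv.2)%N)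
  then nb_pmf p r (uv.1 - il.1) * nb_pmf p r (uv.2 - il.2) else 0.

Lemma fil_esum {R : realType} (p : R) r d il : 0 <= p < 1 ->
  (\esum_(uv in Pairs d) (fil p r il uv)%:E =
   \esum_(st in Pairs (d - il.1%:Z + il.2%:Z)) (nb_pmf p r st.1 * nb_pmf p r st.2)%:E)%E.
Proof.
move=> hp.
pose Q := [set uv : nat * nat | (il.1 <= uv.1)%N /\ (il.2 <= uv.2)%N].
rewrite (esumID Q); last by move=> uv _; rewrite /fil; case: ifP => _ //; rewrite lee_fin mulr_ge0 // nb_ge0.
rewrite [X in (_ + X)%E]esum1 ?adde0; last first.
  move=> [u v] [_ /= nQ]; rewrite /fil /=; case: ifP => // /andP[h1 h2].
  by exfalso; apply: nQ.
rewrite (reindex_esum (Pairs (d - il.1%:Z + il.2%:Z)) _ (fun st => (st.1 + il.1, st.2 + il.2)%N)).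
  apply: eq_esum => st _; rewrite /fil /= !leq_addl /= !addnK //.
split.
- move=> [s t]; rewrite /Pairs /= => h; split; last by split; rewrite leq_addl.
  rewrite /= !PoszD; lia.
- by move=> [s t] [s' t'] _ _ /= [] /addIn -> /addIn ->.
- move=> [u v] [/= h [h1 h2]]; exists (u - il.1, v - il.2)%N; last by rewrite /= !subnK.
  rewrite /Pairs /= in h h1 h2 *; lia.
Qed.

Lemma fil_ge0 {R : realType} (p : R) r il uv : 0 <= p < 1 -> 0 <= fil p r il uv.
Proof. by move=> hp; rewrite /fil; case: ifP => _ //; rewrite mulr_ge0 // nb_ge0. Qed.

Lemma fil_sum {R : realType} (p : R) r uv : 0 <= p < 1 ->
  \sum_(il : 'I_r.+1 * 'I_r.+1) cc p r il.1 * cc p r il.2 * fil p r il uv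
  = ((1 - p) ^+ r * (uv.1 == 0%N)%:R) * ((1 - p) ^+ r * (uv.2 == 0%N)%:R).
Proof.
move=> hp; rewrite -!Pid mulr_suml; under [RHS]eq_bigr do rewrite mulr_sumr.
rewrite pair_bigA /=; apply: eq_bigr => [[i j]] _ /=.
rewrite /fil /=; case: (leqP i uv.1) => h1; case: (leqP j uv.2) => h2 /=;
  rewrite ?mulr0 ?mul0r //; rewrite /cc; ring.
Qed.

Lemma kernel_id {R : realType} (p : R) r (d : int) : 0 <= p < 1 ->
  \sum_(il : 'I_r.+1 * 'I_r.+1) cc p r il.1 * cc p r il.2 * dnb_pmf p r (d - il.1%:Z + il.2%:Z)
  = (1 - p) ^+ (2 * r) * (d == 0)%:R.
Proof.
move=> hp.
pose g (uv : nat * nat) : R := ((1 - p) ^+ r * (uv.1 == 0%N)%:R) * ((1 - p) ^+ r * (uv.2 == 0%N)%:R).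
have g0 uv : 0 <= g uv.
  by rewrite /g mulr_ge0 // mulr_ge0 // exprn_ge0 // subr_ge0; case/andP: hp => _ /ltW.
have := @lincomb R _ _ (Pairs d) (fun il : 'I_r.+1 * 'I_r.+1 => cc p r il.1 * cc p r il.2) (fil p r) g
  (fun j t => fil_ge0 p r j t hp) _ g0 _.
move=> H.
have {H}H : (\esum_(t in Pairs d) (g t)%:E =
  (\sum_(il : 'I_r.+1 * 'I_r.+1) cc p r il.1 * cc p r il.2 * dnb_pmf p r (d - il.1%:Z + il.2%:Z))%:E)%E.
  rewrite H.
  - congr EFin; apply: eq_bigr => il _; congr (_ * _).
    by rewrite fil_esum // /dnb_pmf.
  - by move=> j; rewrite fil_esum //; apply: esum_Pairs_fin.
  - by move=> t _; rewrite fil_sum.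
have gz uv : uv <> (0%N, 0%N) -> g uv = 0.
  case: uv => [[|u] [|v]] // _; by rewrite /g /= ?mulr0 ?mul0r.
apply: EFin_inj; rewrite -H.
have [->|dn0] := eqVneq d 0.
  rewrite (@esum_delta R _ _ (0%N, 0%N)) //.
  - by rewrite /g /= mul2n -addnn exprD; congr EFin; ring.
  - by move=> t /gz ->.
  - by rewrite lee_fin.
rewrite esum1; first by rewrite mulr0.
move=> [u v]; rewrite /Pairs /= => h.
rewrite gz //; case=> hu hv; subst u v.
by move/eqP: dn0; rewrite -h.
Qed.

Lemma sign_diff {R : fieldType} (a b : nat) :
  (-1 : R) ^ (a%:Z - b%:Z) = (-1) ^+ a * (-1) ^+ b.
Proof.
rewrite expfzDr ?oppr_eq0 ?oner_eq0 // -invr_expz.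
by rewrite invr_sign.
Qed.

Lemma bp_eq {R : realType} (p : R) r a : 0 <= p -> (a <= r)%N ->
  binom_pmf (p / (1 + p)) r a = ('C(r, a))%:R * p ^+ a / (1 + p) ^+ r.
Proof.
move=> p0 ar.
have hp : 1 + p != 0 by rewrite gt_eqF // ltr_pwDl.
rewrite /binom_pmf.
have -> : 1 - p / (1 + p) = (1 + p)^-1.
  by field.
rewrite expr_div_n exprVn -!mulrA; congr (_ * _).
rewrite -invfM -exprD subnKC //.
Qed.

Lemma sum_pick {R : ringType} n i0 (F : R) (P : nat -> bool) :
  (i0 < n)%N -> (forall i, P i = (i == i0)) ->
  \sum_(0 <= i < n) (if P i then F else 0) = F.
Proof.
move=> h hP; rewrite big_mkord (bigD1 (Ordinal h)) //= hP eqxx big1 ?addr0 //.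
move=> j /negbTE nj; rewrite hP; case: eqP => // ej.
by move: nj; rewrite -val_eqE /= ej eqxx.
Qed.

Lemma hyp_eq {R : realType} (p : R) r (x : int -> R) k : 0 <= p ->
  \sum_(0 <= i < (2 * r).+1)
     (-1) ^ (i%:Z - r%:Z) * fB (p / (1 + p)) r (i%:Z - r%:Z) * x (k + (i%:Z - r%:Z))
  = ((1 + p) ^+ (2 * r))^-1 *
    \sum_(il : 'I_r.+1 * 'I_r.+1) cc p r il.1 * cc p r il.2 * x (k + (il.1%:Z - il.2%:Z)).
Proof.
move=> p0.
rewrite /fB.
under eq_bigr => i _ do rewrite mulr_sumr mulr_suml.
under eq_bigr => i _ do under eq_bigr => a _ do rewrite mulr_sumr mulr_suml.
rewrite exchange_big /=; under eq_bigr => a _ do rewrite exchange_big /=.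
rewrite pair_bigA /= mulr_sumr; apply: eq_bigr => [[a b]] _ /=.
under eq_bigr => i _.
  rewrite (_ : _ * _ * _ = if (a%:Z - b%:Z == i%:Z - r%:Z) then
   (-1) ^ (a%:Z - b%:Z) * (binom_pmf (p / (1 + p)) r a * binom_pmf (p / (1 + p)) r b) * x (k + (a%:Z - b%:Z))
   else 0); last by case: eqP => [->//|_]; rewrite mulr0 mul0r.
  over.
have h1 : (a + r - b < (2 * r).+1)%N.
  have ha := ltn_ord a; have hb := ltn_ord b; rewrite ltnS; lia.
have h2 : forall i : nat, (a%:Z - b%:Z == i%:Z - r%:Z) = (i == a + r - b)%N.
  move=> i; have hb := ltn_ord b; apply/eqP/eqP => h; lia.
have ha : (a <= r)%N := ltn_ord a.
have hb : (b <= r)%N := ltn_ord b.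
etransitivity.
  exact: (@sum_pick R _ (a + r - b)%N
   ((-1) ^ (a%:Z - b%:Z) * (binom_pmf (p / (1 + p)) r a * binom_pmf (p / (1 + p)) r b) * x (k + (a%:Z - b%:Z)))
   (fun i => (a%:Z - b%:Z == i%:Z - r%:Z)) h1 h2).
rewrite sign_diff (bp_eq p r a p0 ha) (bp_eq p r b p0 hb) /cc.
rewrite [(- p) ^+ a]exprNn [(- p) ^+ b]exprNn.
rewrite mul2n -addnn exprD invfM.
move: ((1 + p) ^+ r)^-1 ((-1) ^+ a : R) ((-1) ^+ b : R) (p ^+ a) (p ^+ b) ('C(r, a))%:R ('C(r, b))%:R (x (k + (a%:Z - b%:Z))) => u v w s t e f z.
ring.
Qed.


Lemma dnb_sumbl {R : realType} (p : R) r (c : int) (z : int -> R) (B : R) : 0 <= p < 1 ->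
  (forall m, 0 <= z m <= B) ->
  (\esum_(m in [set: int]) (dnb_pmf p r (m - c) * z m)%:E < +oo)%E.
Proof.
move=> hp hz.
have B0 : 0 <= B by case/andP: (hz 0) => h1 h2; apply: le_trans h2.
apply: (@le_lt_trans _ _ (B%:E * 1)%E); last by rewrite mule1 ltry.
apply: (@le_trans _ _ (\esum_(m in [set: int]) (B * dnb_pmf p r (m - c))%:E)%E).
  apply: le_esum => m _; rewrite lee_fin mulrC ler_wpM2r ?dnb_ge0 //.
  by case/andP: (hz m).
rewrite esumZ //; apply: lee_wpmul2l; first by rewrite lee_fin.
exact: esum_dnb_le1.
Qed.

Lemma esum_shift {R : realType} (F : int -> \bar R) (c : int) :
  (\esum_(w in [set: int]) F w = \esum_(m in [set: int]) F (m - c)%R)%E.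
Proof.
apply: (reindex_esum [set: int] [set: int] (fun m => (m - c)%R)); split.
- by [].
- by move=> m m' _ _ /= /addIr.
- by move=> w _; exists (w + c) => //=; rewrite addrK.
Qed.

Lemma sum_pair_split {R : ringType} (I J : finType) (G : I * J -> R) :
  \sum_(j : I * J) G j = \sum_(i : I) \sum_(s : J) G (i, s).
Proof. by rewrite pair_big; apply: eq_bigr => [[i s]]. Qed.

Theorem theorem6 (R : realType) (p : R) (r : nat) (x : int -> R) :
  0 < p < 1 -> (0 < r)%N ->
  (exists B : R, forall k, `|x k| <= B) ->
  (forall k : int,
     0 <= \sum_(0 <= i < (2 * r).+1)
            (-1) ^ (i%:Z - r%:Z) * fB (p / (1 + p)) r (i%:Z - r%:Z)
              * x (k + (i%:Z - r%:Z))) ->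
  rowcone_DNB p r x.
Proof.
move=> /andP[p0 p1] r0 [B hB] Hyp.
have hp : 0 <= p < 1 by rewrite ltW.
have B0 : 0 <= B by apply: le_trans (hB 0); exact: normr_ge0.
pose β (il : 'I_r.+1 * 'I_r.+1) := cc p r il.1 * cc p r il.2.
pose y (w : int) := \sum_(il : 'I_r.+1 * 'I_r.+1) β il * x (w + (il.1%:Z - il.2%:Z)).
have y0 w : 0 <= y w.
  have := Hyp w; rewrite (hyp_eq p r x w (ltW p0)) pmulr_rge0 //.
  rewrite invr_gt0 exprn_gt0 //; lra.
pose Y := \sum_(il : 'I_r.+1 * 'I_r.+1) `|β il| * B + 1.
have yY w : y w <= Y.
  rewrite /y /Y; apply: (@le_trans _ _ (\sum_(il : 'I_r.+1 * 'I_r.+1) `|β il| * B)); last by rewrite lerDl.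
  apply: ler_sum => il _; apply: le_trans (ler_norm _) _.
  by rewrite normrM; apply: ler_wpM2l.
have Y0 : 0 < Y.
  apply: (lt_le_trans ltr01); rewrite /Y lerDr; apply: sumr_ge0 => il _; exact: mulr_ge0 (normr_ge0 _) B0.
pose K := (1 - p) ^+ (2 * r).
have K0 : 0 < K by rewrite exprn_gt0 // subr_gt0.
pose A (w : int) (b : bool) : R := if b then y w / Y else 1 - y w / Y.
have A01 w : 0 <= y w / Y <= 1.
  apply/andP; split; first by apply: divr_ge0; [exact: y0 | exact: ltW].
  apply: (@le_trans _ _ (Y / Y)); last by rewrite mulfV // gt_eqF.
  by apply: ler_wpM2r; [rewrite invr_ge0 ltW | apply: yY].
have kerA : is_kernel A.
  move=> w; have /andP[h1 h2] := A01 w; split.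
    by case; rewrite /A // subr_ge0.
  rewrite (esumID [set true]); last by case => _; rewrite lee_fin /A // subr_ge0.
  rewrite !setTI.
  have -> : ~` [set true] = [set false].
    apply/seteqP; split => -[] //=.
  rewrite !esum_set1 ?lee_fin /A ?subr_ge0 // -EFinD.
  by congr EFin; rewrite addrC subrK.
exists (Y / K), bool, (postproc A (M_DNB p r)), true.
split; first by rewrite divr_ge0 // ltW.
split; first by apply: CNF_post => //; exact: CNF_base.
move=> n.
suff -> : postproc A (M_DNB p r) n true = K * x n / Y.
  by field; apply/andP; split; rewrite gt_eqF.
pose xp z := if 0 <= x z then x z else 0.
pose xn z := if 0 <= x z then 0 else - x z.
pose xs (s : bool) := if s then xp else xn.
have xsB s z : 0 <= xs s z <= B.
  have hz := hB z; case: s; rewrite /xs /xp /xn /=; case: (lerP 0 (x z)) => h;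
    apply/andP; split => //.
  - by rewrite ger0_norm in hz.
  - by rewrite oppr_ge0 ltW.
  - by rewrite ltr0_norm in hz.
have xE z : x z = xp z - xn z.
  by rewrite /xp /xn; case: ifP => _; rewrite ?subr0 ?sub0r ?opprK.
have E1 (il : 'I_r.+1 * 'I_r.+1) s :
  (\esum_(w in [set: int]) (dnb_pmf p r (w - n) * xs s (w + (il.1%:Z - il.2%:Z)))%:E =
   \esum_(m in [set: int]) (dnb_pmf p r (m - (n + (il.1%:Z - il.2%:Z))) * xs s m)%:E)%E.
  rewrite (esum_shift _ (il.1%:Z - il.2%:Z)); apply: eq_esum => m _.
  rewrite subrK; congr (EFin (dnb_pmf p r _ * _)).
  by rewrite addrAC -addrA -opprD.
have Ffin (il : 'I_r.+1 * 'I_r.+1) s :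
  (\esum_(m in [set: int]) (dnb_pmf p r (m - (n + (il.1%:Z - il.2%:Z))) * xs s m)%:E < +oo)%E.
  exact: (dnb_sumbl p r _ (xs s) B hp (xsB s)).
have S3 s : \sum_(il : 'I_r.+1 * 'I_r.+1) β il *
    fine (\esum_(m in [set: int]) (dnb_pmf p r (m - (n + (il.1%:Z - il.2%:Z))) * xs s m)%:E)
    = K * xs s n.
  have := @lincomb R int ('I_r.+1 * 'I_r.+1)%type [set: int] β
    (fun il m => dnb_pmf p r (m - (n + (il.1%:Z - il.2%:Z))) * xs s m)
    (fun m => K * (m == n)%:R * xs s m).
  move=> H; apply: EFin_inj; rewrite -H; clear H.
  - rewrite (@esum_delta R _ _ n) //.
    + by rewrite eqxx mulr1.
    + by move=> m /eqP/negbTE ->; rewrite mulr0 mul0r.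
    + rewrite lee_fin eqxx mulr1; apply: mulr_ge0; [exact: ltW | by case/andP: (xsB s n)].
  - move=> j t; rewrite mulr_ge0 ?dnb_ge0 //; by case/andP: (xsB s t).
  - by move=> j; apply: Ffin.
  - move=> t; apply: mulr_ge0; [apply: mulr_ge0 => //; exact: ltW | by case/andP: (xsB s t)].
  - move=> m _.
    transitivity ((\sum_(il : 'I_r.+1 * 'I_r.+1) cc p r il.1 * cc p r il.2 *
                     dnb_pmf p r ((m - n) - il.1%:Z + il.2%:Z)) * xs s m).
      rewrite mulr_suml; apply: eq_bigr => il _; rewrite /β mulrA; congr (_ * _ * _).
      by congr dnb_pmf; ring.
    by rewrite kernel_id // subr_eq0.
have H1 := @lincomb R int (('I_r.+1 * 'I_r.+1) * bool)%type [set: int]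
    (fun j => β j.1 / Y * (if j.2 then 1 else -1))
    (fun j w => dnb_pmf p r (w - n) * xs j.2 (w + (j.1.1%:Z - j.1.2%:Z)))
    (fun w => dnb_pmf p r (w - n) * (y w / Y)).
rewrite /postproc /M_DNB /A /= H1; clear H1.
- rewrite /= sum_pair_split.
  under eq_bigr => il _ do rewrite big_bool !E1.
  have S3t := S3 true; have S3f := S3 false; rewrite /= in S3t S3f *.
  rewrite (xE n) mulrBr mulrBl -S3t -S3f mulr_suml mulr_suml -sumrB.
  apply: eq_bigr => il _; rewrite /=.
  ring.
- move=> j t; apply: mulr_ge0; [exact: dnb_ge0 | by case/andP: (xsB j.2 (t + (j.1.1%:Z - j.1.2%:Z)))].
- move=> j; have := Ffin j.1 j.2; rewrite -E1; exact.
- move=> t; apply: mulr_ge0; [exact: dnb_ge0 | apply: divr_ge0; [exact: y0 | exact: ltW]].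
- move=> w _; rewrite sum_pair_split.
  under eq_bigr => il _ do rewrite big_bool /=.
  rewrite /y mulr_suml mulr_sumr; apply: eq_bigr => il _.
  rewrite (xE (w + _)) /=; ring.
Qed.
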